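(* The function $f:(0,\infty)\to\mathbb{R}$, $f(z)=\tfrac12W(z)^2+W(z)$ (which equals $-T_2(-z)$ where $T_2(z)=\sum_{n\ge1}n^{n-2}z^n/n!$, for small $z$), is a Bernstein function.
   Context: $W$ is the principal branch of Lambert's W function: the solution of $W(z)e^{W(z)}=z$ that is real and positive for $z>0$, with $W(z)=\sum_{n\ge1}(-n)^{n-1}z^n/n!$ near $0$. A $C^\infty$ function $g:(0,\infty)\to\mathbb{R}$ is completely monotonic if $(-1)^ng^{(n)}(z)\ge0$ for all $z>0$ and $n\ge0$; $f$ is a Bernstein function if $f$ is $C^\infty$, $f(z)>0$ for all $z>0$, and $f'$ is completely monotonic. *)

(* Defs.v *)
From Stdlib Require Import Reals ClassicalEpsilon.
From Coquelicot Require Import Coquelicot.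
Open Scope R_scope.

(* Principal branch of Lambert W on (0,oo): the (unique) w > 0 with w e^w = z.
   Values for z <= 0 are irrelevant (unspecified). *)
Definition LambertW (z : R) : R :=
  epsilon (inhabits 0) (fun w => 0 < w /\ w * exp w = z).

Definition smooth_on_pos (g : R -> R) : Prop :=
  forall (n : nat) (z : R), 0 < z -> ex_derive_n g n z.

Definition completely_monotonic (g : R -> R) : Prop :=
  smooth_on_pos g /\
  forall (n : nat) (z : R), 0 < z -> 0 <= (-1) ^ n * Derive_n g n z.

Definition Bernstein (f : R -> R) : Prop :=
  smooth_on_pos f /\ (forall z, 0 < z -> 0 < f z) /\
  completely_monotonic (Derive f).

(* Main.v *)
Require Import Defs.
From Stdlib Require Import Reals Lra Lia List ClassicalEpsilon Ranalysis5.
From Coquelicot Require Import Coquelicot.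
Open Scope R_scope.
Import ListNotations.

Definition fw (w : R) := w * exp w.

Lemma fw_incr : forall a b, 0 <= a -> a < b -> fw a < fw b.
Proof.
  intros a b Ha Hab. unfold fw.
  assert (exp a < exp b) by (apply exp_increasing; lra).
  assert (0 < exp a) by apply exp_pos.
  nra.
Qed.

Lemma W_spec : forall z, 0 < z -> 0 < LambertW z /\ LambertW z * exp (LambertW z) = z.
Proof.
  intros z Hz. unfold LambertW. apply epsilon_spec.
  assert (Hc : continuity (fun w => w * exp w - z)).
  { apply continuity_minus; [apply continuity_mult; [apply derivable_continuous, derivable_id | apply derivable_continuous, derivable_exp] | apply continuity_const; intros ? ?; reflexivity]. }
  assert (H1 : 1 + z < exp z) by (apply exp_ineq1; lra).
  destruct (IVT _ 0 z Hc Hz) as [w [Hw1 Hw2]].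
  - rewrite Rmult_0_l. lra.
  - nra.
  - exists w. split.
    + destruct Hw1 as [Hw1 _]. destruct Hw1 as [Hw1|Hw1]; auto.
      subst w. rewrite Rmult_0_l in Hw2. lra.
    + lra.
Qed.

Lemma fw_der : forall w, derivable_pt_lim fw w (exp w + w * exp w).
Proof.
  intros w. apply is_derive_Reals. unfold fw. auto_derive; auto. ring.
Qed.

Lemma fw_derivable : forall w, derivable_pt fw w.
Proof. intros w. exists (exp w + w * exp w). apply fw_der. Qed.

Lemma W_mono : forall a b, 0 < a -> a < b -> LambertW a < LambertW b.
Proof.
  intros a b Ha Hab.
  destruct (W_spec a Ha) as [Wa Ea]. destruct (W_spec b ltac:(lra)) as [Wb Eb].
  destruct (Rlt_or_le (LambertW a) (LambertW b)) as [H|H]; auto.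
  destruct H as [H|H].
  - assert (fw (LambertW b) < fw (LambertW a)) by (apply fw_incr; lra).
    unfold fw in *. lra.
  - rewrite H in Eb. lra.
Qed.

Lemma W_cont : forall z, 0 < z -> continuity_pt LambertW z.
Proof.
  intros z Hz. destruct (W_spec z Hz) as [Wp We].
  set (w := LambertW z) in *.
  assert (Hfl : 0 < fw (w/2)) by (unfold fw; pose proof (exp_pos (w/2)); nra).
  apply (continuity_pt_recip_interv fw LambertW (w/2) (w+1)).
  - lra.
  - intros x y Hx Hxy Hy. apply fw_incr; lra.
  - intros x Hx _. unfold comp, id. apply (W_spec x). lra.
  - intros x Hx1 Hx2. destruct (W_spec x ltac:(lra)) as [Wx Ex].
    split.
    + destruct (Rlt_or_le (LambertW x) (w/2)) as [H|H]; [|lra].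
      assert (fw (LambertW x) < fw (w/2)) by (apply fw_incr; lra).
      unfold fw in *. lra.
    + destruct (Rlt_or_le (w+1) (LambertW x)) as [H|H]; [|lra].
      assert (fw (w+1) < fw (LambertW x)) by (apply fw_incr; lra).
      unfold fw in *. lra.
  - intros a _. apply derivable_continuous_pt, fw_derivable.
  - split.
    + replace z with (fw w) by (unfold fw; auto). apply fw_incr; lra.
    + replace z with (fw w) at 1 by (unfold fw; auto). apply fw_incr; lra.
Qed.

Lemma W_der : forall z, 0 < z ->
  is_derive LambertW z (exp (- LambertW z) / (1 + LambertW z)).
Proof.
  intros z Hz. destruct (W_spec z Hz) as [Wp We].
  assert (Hmono : LambertW (z/2) <= LambertW z <= LambertW (2*z)).
  { split; left; apply W_mono; lra. }
  pose proof (derivable_pt_lim_recip_interv fw LambertW (z/2) (2*z) z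
     (fun a _ => fw_derivable a) (W_cont z Hz) ltac:(lra) ltac:(lra) Hmono) as H.
  rewrite (derive_pt_eq_0 _ _ _ _ (fw_der (LambertW z))) in H.
  assert (Hne : exp (LambertW z) + LambertW z * exp (LambertW z) <> 0).
  { pose proof (exp_pos (LambertW z)). nra. }
  specialize (H (fun x Hx => proj2 (W_spec x ltac:(lra))) Hne).
  apply is_derive_Reals.
  replace (exp (- LambertW z) / (1 + LambertW z)) with
    (1 / (exp (LambertW z) + LambertW z * exp (LambertW z))); auto.
  rewrite exp_Ropp. pose proof (exp_pos (LambertW z)). field. repeat split; try apply Rgt_not_eq; try nra.
Qed.

Fixpoint ev (l : list R) (v : R) : R :=
  match l with nil => 0 | a :: l' => a + v * ev l' v end.
Fixpoint evD (l : list R) (v : R) : R :=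
  match l with nil => 0 | a :: l' => ev l' v + v * evD l' v end.
Fixpoint Eul (k : R) (l : list R) : list R :=
  match l with nil => nil | a :: l' => k * a :: Eul (k+1) l' end.
Fixpoint Wt (c k : R) (l : list R) : list R :=
  match l with nil => nil | a :: l' => (c - k) * a :: Wt c (k+1) l' end.
Fixpoint ladd (l1 l2 : list R) : list R :=
  match l1, l2 with
  | nil, _ => l2
  | _, nil => l1
  | a :: l1', b :: l2' => (a + b) :: ladd l1' l2'
  end.

Lemma ev_ladd : forall l1 l2 v, ev (ladd l1 l2) v = ev l1 v + ev l2 v.
Proof.
  induction l1 as [|a l1 IH]; intros [|b l2] v; simpl; try ring.
  rewrite IH. ring.
Qed.

Lemma len_ladd : forall l1 l2, length (ladd l1 l2) = Nat.max (length l1) (length l2).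
Proof.
  induction l1 as [|a l1 IH]; intros [|b l2]; simpl; auto.
Qed.

Lemma ev_Eul : forall l k v, ev (Eul k l) v = k * ev l v + v * evD l v.
Proof. induction l as [|a l IH]; intros k v; simpl; [ring|]. rewrite IH. ring. Qed.

Lemma ev_Wt : forall l c k v, ev (Wt c k l) v = c * ev l v - ev (Eul k l) v.
Proof. induction l as [|a l IH]; intros c k v; simpl; [ring|]. rewrite IH. simpl. ring. Qed.

Lemma ev_map : forall l s v, ev (map (fun a => s * a) l) v = s * ev l v.
Proof. induction l as [|a l IH]; intros s v; simpl; [ring|]. rewrite IH. ring. Qed.

Lemma len_Wt : forall l c k, length (Wt c k l) = length l.
Proof. induction l; intros; simpl; auto. Qed.

Lemma Wt_nonneg : forall l c k, List.Forall (fun a => 0 <= a) l ->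
  INR (length l) + k <= c + 1 -> List.Forall (fun a => 0 <= a) (Wt c k l).
Proof.
  induction l as [|a l IH]; intros c k Hl Hk; simpl; constructor.
  - inversion Hl. change (length (a :: l)) with (S (length l)) in Hk. rewrite S_INR in Hk. pose proof (pos_INR (length l)).
    apply Rmult_le_pos; lra.
  - inversion Hl. apply IH; auto. change (length (a :: l)) with (S (length l)) in Hk. rewrite S_INR in Hk. lra.
Qed.

Lemma ladd_nonneg : forall l1 l2, List.Forall (fun a => 0 <= a) l1 -> List.Forall (fun a => 0 <= a) l2 ->
  List.Forall (fun a => 0 <= a) (ladd l1 l2).
Proof.
  induction l1 as [|a l1 IH]; intros [|b l2] H1 H2; simpl; auto.
  inversion H1; inversion H2; constructor; [lra| auto].
Qed.

Lemma map_nonneg : forall l s, 0 <= s -> List.Forall (fun a => 0 <= a) l ->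
  List.Forall (fun a => 0 <= a) (map (fun a => s * a) l).
Proof.
  induction l as [|a l IH]; intros s Hs Hl; simpl; constructor; inversion Hl.
  apply Rmult_le_pos; auto. auto.
Qed.

Lemma ev_nonneg : forall l v, 0 <= v -> List.Forall (fun a => 0 <= a) l -> 0 <= ev l v.
Proof.
  induction l as [|a l IH]; intros v Hv Hl; simpl; [lra|]. inversion Hl.
  pose proof (IH v Hv H2). nra.
Qed.

Lemma ev_der : forall l v, is_derive (ev l) v (evD l v).
Proof.
  induction l as [|a l IH]; intros v; simpl.
  - apply (is_derive_const (K:=R_AbsRing) 0).
  - eapply is_derive_ext. { intros t. reflexivity. }
    auto_derive.
    + exists (evD l v). apply IH.
    + replace (Derive (fun x : R => ev l x) v) with (evD l v) by (symmetry; apply is_derive_unique, IH). ring.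
Qed.

Definition Lnext (n : nat) (l : list R) : list R :=
  ladd (0 :: map (fun a => (INR n + 1) * a) l) (Wt (2 * INR n) 0 l).

Fixpoint L (n : nat) : list R :=
  match n with O => [1] | S m => Lnext m (L m) end.

Lemma L_inv : forall n, List.Forall (fun a => 0 <= a) (L n) /\ (length (L n) <= S n)%nat.
Proof.
  induction n as [|n [IH1 IH2]]; simpl.
  - split; auto. constructor; [lra|constructor].
  - unfold Lnext. split.
    + apply ladd_nonneg.
      * constructor; [lra|]. apply map_nonneg; auto. pose proof (pos_INR n); lra.
      * apply Wt_nonneg; auto. apply le_INR in IH2. rewrite S_INR in IH2. pose proof (pos_INR n). lra.
    + rewrite len_ladd. change (length (0 :: map (fun a => (INR n + 1) * a) (L n))) with (S (length (map (fun a => (INR n + 1) * a) (L n)))). rewrite length_map, len_Wt. lia.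
Qed.

Lemma ev_L_S : forall n v, ev (L (S n)) v =
  ((INR n + 1) * v + 2 * INR n) * ev (L n) v - v * evD (L n) v.
Proof.
  intros n v. simpl. unfold Lnext. rewrite ev_ladd. simpl. rewrite ev_map, ev_Wt, ev_Eul. ring.
Qed.

Definition h (n : nat) (w : R) : R :=
  (-1) ^ n * exp (- (INR n + 1) * w) * ev (L n) (1 + w) / (1 + w) ^ (2 * n).

Definition F (n : nat) (z : R) : R := h n (LambertW z).

Lemma h_der : forall n w, 0 < w -> is_derive (h n) w
  ((-1) ^ n * (exp (- (INR n + 1) * w) *
     ( - (INR n + 1) * ev (L n) (1 + w) / (1 + w) ^ (2 * n)
       + evD (L n) (1 + w) / (1 + w) ^ (2 * n)
       - INR (2 * n) * ev (L n) (1 + w) / (1 + w) ^ (2 * n + 1)))).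
Proof.
  intros n w Hw. unfold h.
  auto_derive.
  - split; [exists (evD (L n) (1 + w)); apply ev_der|].
    split; auto. apply pow_nonzero. lra.
  - replace (Derive (fun x : R => ev (L n) x) (1 + w)) with (evD (L n) (1 + w))
      by (symmetry; apply is_derive_unique, ev_der).
    replace (n + (n + 0))%nat with (2 * n)%nat by lia.
    assert (Hv : 0 < 1 + w) by lra.
    destruct (2 * n)%nat as [|m].
    + simpl. field. lra.
    + rewrite pow_add. simpl pred. simpl pow.
      assert (0 < (1 + w) ^ m) by (apply pow_lt; lra).
      field. lra.
Qed.

Lemma F_der : forall n z, 0 < z -> is_derive (F n) z (F (S n) z).
Proof.
  intros n z Hz. unfold F.
  destruct (W_spec z Hz) as [Wp _].
  pose proof (is_derive_comp (h n) LambertW z _ _ (h_der n _ Wp) (W_der z Hz)) as H.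
  eapply is_derive_ext; [intros t; reflexivity|].
  replace (h (S n) (LambertW z)) with
     (scal (exp (- LambertW z) / (1 + LambertW z))
       ((-1) ^ n * (exp (- (INR n + 1) * LambertW z) *
     ( - (INR n + 1) * ev (L n) (1 + LambertW z) / (1 + LambertW z) ^ (2 * n)
       + evD (L n) (1 + LambertW z) / (1 + LambertW z) ^ (2 * n)
       - INR (2 * n) * ev (L n) (1 + LambertW z) / (1 + LambertW z) ^ (2 * n + 1))))).
  { exact H. }
  set (w := LambertW z) in *.
  unfold h. rewrite ev_L_S, S_INR, mult_INR.
  replace (2 * S n)%nat with (2 * n + 2)%nat by lia.
  rewrite (pow_add (1+w) (2*n) 2), (pow_add (1+w) (2*n) 1).
  set (P := (1 + w) ^ (2 * n)) in *.
  change (scal ?a ?b) with (a * b).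
  replace ((-1) ^ S n) with (-1 * (-1) ^ n) by (simpl; ring).
  replace (exp (- (INR n + 1 + 1) * w)) with (exp (- (INR n + 1) * w) * exp (- w))
    by (rewrite <- exp_plus; f_equal; ring).
  assert (Hv : 0 < 1 + w) by lra.
  assert (HP : 0 < P) by (unfold P; apply pow_lt; lra).
  simpl. field. repeat split; apply Rgt_not_eq; lra.
Qed.

Lemma pos_loc : forall z (P : R -> Prop), 0 < z -> (forall y, 0 < y -> P y) -> locally z P.
Proof.
  intros z P Hz HP. exists (mkposreal z Hz). intros y Hy. apply HP.
  change (Rabs (y - z) < z) in Hy. apply Rabs_def2 in Hy. lra.
Qed.

Definition fB := fun z => / 2 * LambertW z ^ 2 + LambertW z.

Lemma fB_der : forall z, 0 < z -> is_derive fB z (exp (- LambertW z)).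
Proof.
  intros z Hz. destruct (W_spec z Hz) as [Wp _].
  assert (Hp : is_derive (fun w : R => / 2 * w ^ 2 + w) (LambertW z) (LambertW z + 1)).
  { auto_derive; auto. simpl. field. }
  pose proof (is_derive_comp _ LambertW z _ _ Hp (W_der z Hz)) as H.
  unfold fB. eapply is_derive_ext; [intros t; reflexivity|].
  replace (exp (- LambertW z)) with (scal (exp (- LambertW z) / (1 + LambertW z)) (LambertW z + 1)).
  { exact H. }
  unfold scal; simpl; unfold mult; simpl. field. lra.
Qed.

Lemma Dn : forall n y, 0 < y ->
  Derive_n (Derive fB) n y = F n y /\ ex_derive_n (Derive fB) n y.
Proof.
  induction n as [|m IH]; intros y Hy.
  - split; [|exact I]. simpl. rewrite (is_derive_unique _ _ _ (fB_der y Hy)).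
    unfold F, h. simpl. replace (- (0 + 1) * LambertW y) with (- LambertW y) by ring. field.
  - assert (Hl : locally y (fun t => F m t = Derive_n (Derive fB) m t)).
    { apply pos_loc; auto. intros t Ht. symmetry. apply (IH t Ht). }
    split.
    + change (Derive (Derive_n (Derive fB) m) y = F (S m) y).
      rewrite <- (Derive_ext_loc _ _ _ Hl). apply is_derive_unique, F_der; auto.
    + change (ex_derive (Derive_n (Derive fB) m) y).
      apply (ex_derive_ext_loc _ _ _ Hl). eexists. apply F_der; auto.
Qed.

Theorem mainTheorem9 :
  Bernstein (fun z => / 2 * LambertW z ^ 2 + LambertW z).
Proof.
  change (Bernstein fB). split; [|split].
  - intros [|[|m]] z Hz.
    + exact I.
    + eexists. apply fB_der; auto.
    + change (ex_derive (Derive_n fB (S m)) z).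
      assert (Hl : locally z (fun t => F m t = Derive_n fB (S m) t)).
      { apply pos_loc; auto. intros t Ht.
        rewrite <- (proj1 (Dn m t Ht)).
        replace (S m) with (m + 1)%nat by lia.
        rewrite <- Derive_n_comp. reflexivity. }
      apply (ex_derive_ext_loc _ _ _ Hl). eexists. apply F_der; auto.
  - intros z Hz. destruct (W_spec z Hz) as [Wp _]. unfold fB.
    pose proof (pow_lt _ 2 Wp). lra.
  - split.
    + intros n z Hz. apply (Dn n z Hz).
    + intros n z Hz. rewrite (proj1 (Dn n z Hz)).
      destruct (W_spec z Hz) as [Wp _].
      unfold F, h. set (w := LambertW z) in *.
      assert (Hs : (-1) ^ n * (-1) ^ n = 1).
      { rewrite <- Rpow_mult_distr. replace (-1 * -1) with 1 by ring. apply pow1. }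
      assert (He : 0 <= ev (L n) (1 + w)).
      { apply ev_nonneg; [lra|]. apply (proj1 (L_inv n)). }
      assert (HP : 0 < (1 + w) ^ (2 * n)) by (apply pow_lt; lra).
      pose proof (exp_pos (- (INR n + 1) * w)).
      replace ((-1) ^ n * ((-1) ^ n * exp (- (INR n + 1) * w) * ev (L n) (1 + w) / (1 + w) ^ (2 * n)))
        with (((-1) ^ n * (-1) ^ n) * (exp (- (INR n + 1) * w) * ev (L n) (1 + w) / (1 + w) ^ (2 * n)))
        by (field; apply Rgt_not_eq; lra).
      rewrite Hs, Rmult_1_l. apply Rmult_le_pos; [apply Rmult_le_pos; lra|].
      left. apply Rinv_0_lt_compat. auto.
Qed.
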